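(* Let $\mathcal{A} = (Q,\Sigma,\delta,I,F)$ be a UFA. Suppose its forward determinization has $k$ states and its backward determinization has $\ell$ states. Then there exists a graph $G=(Q,E)$ (on the state set of $\mathcal{A}$) that has at least $k$ cliques and at least $\ell$ cocliques.
   Context: A UFA is an NFA $(Q,\Sigma,\delta,I,F)$ (finite states $Q$, finite alphabet $\Sigma$, transitions $\delta\subseteq Q\times\Sigma\times Q$, initial states $I$, accepting states $F$) in which every word has at most one accepting run. For $S\subseteq Q$, $w\in\Sigma^*$: $\delta(S,w)=\{r\mid\exists q\in S.\ q\xrightarrow{w}r\}$, $\delta^{-1}(w,S)=\{r\mid \exists q\in S.\ r\xrightarrow{w} q\}$. The forward determinization has state set $\{\delta(I,w)\mid w\in\Sigma^*\}$; the backward determinization has state set $\{\delta^{-1}(w,F)\mid w\in\Sigma^*\}$. A graph is a finite simple undirected graph $(V,E)$. A clique is a set $X\subseteq V$ with every two distinct vertices adjacent; a coclique (independent set) is a set $Y\subseteq V$ with no two distinct vertices adjacent. The empty set and singletons count as both cliques and cocliques. *)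

(* Defs.v *)
From mathcomp Require Import all_boot.
From mathcomp Require Import boolp.
Set Implicit Arguments. Unset Strict Implicit. Unset Printing Implicit Defensive.

Section NFA.
Variables (Q S : finType).
Variable delta : Q -> S -> Q -> bool.

(* [run q w qs]: qs = [q1; ...; qn] is the sequence of states visited after
   q = q0 while reading w = [a1; ...; an], i.e. q_{i-1} -a_i-> q_i. *)
Fixpoint run (q : Q) (w : seq S) (qs : seq Q) : bool :=
  match w, qs with
  | [::], [::] => true
  | a :: w', q' :: qs' => delta q a q' && run q' w' qs'
  | _, _ => false
  end.

Definition accepting_run (I F : {set Q}) (w : seq S) (q0 : Q) (qs : seq Q) : bool :=
  [&& q0 \in I, run q0 w qs & last q0 qs \in F].

Definition unambiguous (I F : {set Q}) : Prop :=
  forall w q0 qs q0' qs',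
    accepting_run I F w q0 qs -> accepting_run I F w q0' qs' ->
    q0 :: qs = q0' :: qs'.

Definition step (X : {set Q}) (a : S) : {set Q} :=
  [set r | [exists q in X, delta q a r]].
Definition fwd (X : {set Q}) (w : seq S) : {set Q} := foldl step X w.

Definition bstep (a : S) (X : {set Q}) : {set Q} :=
  [set r | [exists q in X, delta r a q]].
Definition bwd (w : seq S) (X : {set Q}) : {set Q} := foldr bstep X w.

Definition fwd_det_states (I : {set Q}) : {set {set Q}} :=
  [set X | `[< exists w : seq S, X = fwd I w >]].
Definition bwd_det_states (F : {set Q}) : {set {set Q}} :=
  [set X | `[< exists w : seq S, X = bwd w F >]].
End NFA.

Definition simple_graph (T : finType) (e : rel T) : Prop :=
  symmetric e /\ irreflexive e.

Definition clique (T : finType) (e : rel T) (X : {set T}) : bool :=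
  [forall x in X, forall y in X, (x != y) ==> e x y].
Definition coclique (T : finType) (e : rel T) (X : {set T}) : bool :=
  [forall x in X, forall y in X, (x != y) ==> ~~ e x y].

Definition cliques (T : finType) (e : rel T) : {set {set T}} :=
  [set X | clique e X].
Definition cocliques (T : finType) (e : rel T) : {set {set T}} :=
  [set X | coclique e X].

(* Main.v *)
Require Import Defs.
From mathcomp Require Import all_boot.
From mathcomp Require Import boolp.

Section H.
Variables (Q S : finType) (delta : Q -> S -> Q -> bool).

Lemma run_size q w qs : run delta q w qs -> size qs = size w.
Proof.
elim: w q qs => [|a w IH] q [|q' qs] //= /andP[_ H].
by rewrite (IH _ _ H).
Qed.

Lemma run_cat q u v qs1 qs2 : run delta q u qs1 -> run delta (last q qs1) v qs2 ->
  run delta q (u ++ v) (qs1 ++ qs2).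
Proof.
elim: u q qs1 => [|a u IH] q [|q' qs] //= /andP[H1 H2] H3.
by rewrite H1 (IH _ _ H2 H3).
Qed.

Lemma fwd_run (X : {set Q}) u p : p \in fwd delta X u ->
  exists q0 qs, [/\ q0 \in X, run delta q0 u qs & last q0 qs = p].
Proof.
elim: u X => [|a u IH] X /=.
  by move=> Hp; exists p, [::].
move=> /IH [q1 [qs [H1 H2 H3]]].
move: H1; rewrite inE => /exists_inP [q0 Hq0 Hd].
by exists q0, (q1 :: qs); split => //=; rewrite Hd H2.
Qed.

Lemma bwd_run (X : {set Q}) w r : r \in bwd delta w X ->
  exists qs, run delta r w qs /\ last r qs \in X.
Proof.
elim: w r => [|a w IH] r /=.
  by move=> Hr; exists [::].
rewrite inE => /exists_inP [q Hq Hd].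
have [qs [H1 H2]] := IH _ Hq.
by exists (q :: qs); rewrite /= Hd H1.
Qed.
End H.

Theorem lemma2 (Q S : finType) (delta : Q -> S -> Q -> bool) (I F : {set Q})
  (k l : nat) :
  unambiguous delta I F ->
  #|fwd_det_states delta I| = k ->
  #|bwd_det_states delta F| = l ->
  exists e : rel Q,
    simple_graph e /\ k <= #|cliques e| /\ l <= #|cocliques e|.
Proof.
move=> Hun <- <-.
pose e := fun p q : Q => (p != q) &&
  [exists X in fwd_det_states delta I, (p \in X) && (q \in X)].
exists e; split; [split|split].
- move=> p q; rewrite /e eq_sym; congr (_ && _).
  by apply/exists_inP/exists_inP => -[X HX /andP[H1 H2]]; exists X => //; rewrite H1 H2.
- by move=> p; rewrite /e eqxx.
- apply: subset_leq_card; apply/subsetP => X; rewrite !inE => HX.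
  apply/forall_inP => x Hx; apply/forall_inP => y Hy; apply/implyP => Hxy.
  rewrite /e Hxy /=; apply/exists_inP; exists X; first by rewrite inE.
  by rewrite Hx Hy.
- apply: subset_leq_card; apply/subsetP => X; rewrite !inE => /asboolP [v ->].
  apply/forall_inP => x Hx; apply/forall_inP => y Hy; apply/implyP => Hxy.
  rewrite /e Hxy /=; apply/negP => /exists_inP [Y]; rewrite inE.
  move=> /asboolP [u ->] /andP [Hxu Hyu].
  have [q0 [qs [Hq0 Hr Hl]]] := fwd_run _ _ delta _ _ _ Hxu.
  have [q0' [qs' [Hq0' Hr' Hl']]] := fwd_run _ _ delta _ _ _ Hyu.
  have [vs [Hv Hvl]] := bwd_run _ _ delta _ _ _ Hx.
  have [vs' [Hv' Hvl']] := bwd_run _ _ delta _ _ _ Hy.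
  have A1 : accepting_run delta I F (u ++ v) q0 (qs ++ vs).
    rewrite /accepting_run Hq0 (run_cat _ _ _ _ _ _ _ _ Hr) ?Hl //= last_cat Hl //.
  have A2 : accepting_run delta I F (u ++ v) q0' (qs' ++ vs').
    rewrite /accepting_run Hq0' (run_cat _ _ _ _ _ _ _ _ Hr') ?Hl' //= last_cat Hl' //.
  have := Hun _ _ _ _ _ A1 A2 => -[E1 E2].
  have Hs : size qs = size qs' by rewrite (@run_size _ _ delta _ _ _ Hr) (@run_size _ _ delta _ _ _ Hr').
  have := congr1 (take (size qs)) E2.
  rewrite take_size_cat // Hs take_size_cat // => Eq.
  by move: Hxy; rewrite -Hl -Hl' Eq E1 eqxx.
Qed.
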